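(* Let $n,b$ be integers with $1<n<b$, and let $\Gamma$ be the $(n,b)$-Hoey-Sloane graph. If $(c_1,c_2)$ is an edge of $\Gamma$ with edge label $(d_1,d_2)$, then $(n-1-c_1,\,n-1-c_2)$ is also an edge of $\Gamma$, and $(b-1-d_1,\,b-1-d_2)$ is one of its edge labels.
   Context: Let $\lambda(x)$ denote the least non-negative residue of $x$ modulo $b$. The $(n,b)$-mother graph $M$ is the directed graph on vertex set $\{0,\ldots,b-1\}$ whose edges are the ordered pairs of digits $(d_1,d_2)$ with $\lambda(d_1+(b-n)d_2)\le n-1$. The $(n,b)$-Hoey-Sloane graph $\Gamma$ is the edge-labelled directed graph with vertex set (states) $\{0,1,\ldots,n-1\}$ in which, for states $c_1,c_2$, the pair $(c_1,c_2)$ is an edge precisely when the set $\{(d_1,d_2)\text{ an edge of }M \mid n d_2-d_1+c_1=b\,c_2\}$ is nonempty; this set is the collection of edge labels of $(c_1,c_2)$. (An input $(d_1,d_2)$ thus encodes one step of multiplying a number by $n$ in base $b$: multiplicand digit $d_2$, incoming carry $c_1$, product digit $d_1$, outgoing carry $c_2$.) *)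

(* Defs.v *)
From mathcomp Require Import all_boot.
Set Implicit Arguments. Unset Strict Implicit. Unset Printing Implicit Defensive.

(* lambda x = least non-negative residue of x modulo b (x >= 0 here since n < b) *)
Definition lambda (b x : nat) : nat := x %% b.

(* (d1,d2) is an edge of the (n,b)-mother graph: digits < b and
   lambda(d1 + (b-n) d2) <= n-1  (note b - n is a genuine difference as n < b) *)
Definition mother_edge (n b d1 d2 : nat) : bool :=
  [&& d1 < b, d2 < b & lambda b (d1 + (b - n) * d2) <= n - 1].

(* (d1,d2) is an edge label of (c1,c2) in the (n,b)-Hoey-Sloane graph:
   c1, c2 states in {0..n-1}, (d1,d2) an edge of M, and
   n d2 - d1 + c1 = b c2, written over nat as n d2 + c1 = b c2 + d1 *)
Definition hs_label (n b c1 c2 d1 d2 : nat) : bool :=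
  [&& c1 < n, c2 < n, mother_edge n b d1 d2 & n * d2 + c1 == b * c2 + d1].

Definition hs_edge (n b c1 c2 : nat) : Prop :=
  exists d1 d2, hs_label n b c1 c2 d1 d2.

(* Main.v *)
Require Import Defs.
From mathcomp Require Import all_boot.
From mathcomp Require Import zify.

Theorem theorem11 (n b c1 c2 d1 d2 : nat) :
  1 < n -> n < b ->
  hs_label n b c1 c2 d1 d2 ->
  hs_edge n b (n - 1 - c1) (n - 1 - c2) /\
  hs_label n b (n - 1 - c1) (n - 1 - c2) (b - 1 - d1) (b - 1 - d2).
Proof.
move=> Hn Hb /and4P [Hc1 Hc2 /and3P [Hd1 Hd2 Hm] /eqP He].
suff H : hs_label n b (n - 1 - c1) (n - 1 - c2) (b - 1 - d1) (b - 1 - d2).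
  by split => //; exists (b - 1 - d1), (b - 1 - d2).
rewrite /lambda in Hm.
have [e2 He2] : exists e2, b - 1 - d2 = e2 by eexists.
have [f2 Hf2] : exists f2, n - 1 - c2 = f2 by eexists.
have E2 : d2 + e2 = b - 1 by lia.
have F2 : c2 + f2 = n - 1 by lia.
have M1 : n * d2 + n * e2 = n * b - n by rewrite -mulnDr E2 mulnBr muln1.
have M2 : b * c2 + b * f2 = b * n - b by rewrite -mulnDr F2 mulnBr muln1.
have Mbn : n * b = b * n by rewrite mulnC.
have Hnb : b <= b * n by rewrite leq_pmulr; lia.
have Hnb' : n <= n * b by rewrite leq_pmulr; lia.
rewrite He2 Hf2.
set x := d1 + (b - n) * d2 in Hm.
have Hx := divn_eq x b.
set q := x %/ b in Hx. set r := x %% b in Hx Hm.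
have Hr : r < b by rewrite ltn_mod; lia.
clearbody q r.
set m := b - n.
have Hxd : x = d1 + m * d2 by [].
have Hmd : m = b - n by [].
clearbody x m.
have Mm : m * d2 + m * e2 = m * b - m by rewrite -mulnDr E2 mulnBr muln1.
have Mm' : m <= m * b by rewrite leq_pmulr; lia.
have Hq : q <= m.
  have h : q * b < m.+1 * b.
    rewrite mulSn. lia.
  by rewrite ltn_pmul2r in h; lia.
have Mq : q * b + (m - q) * b = m * b by rewrite -mulnDl subnKC.
have Hy : b - 1 - d1 + m * e2 = (m - q) * b + (n - 1 - r).
  lia.
apply/and4P; split; [lia|lia| |].
  apply/and3P; split; [lia|lia|].
  rewrite /lambda -Hmd Hy modnMDl modn_small; lia.
apply/eqP; clear -M1 M2 Mbn Hnb Hnb' He Hc1 Hd1 Hn Hb; lia.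
Qed.
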